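(* Let $Z$ be a random vector in $\mathbb{R}^d$ with a probability density $\mu_Z$ such that $\|Z\|$ is $\sqrt d\sigma_Z$-sub-Gaussian. Let $\overline{\alpha}=\inf\{\alpha:\mathbb{P}[\|Z\|\le\alpha]=1\}\in(0,\infty]$. For $\alpha\in(0,\overline\alpha)$ let $V\sim\mathrm{Uniform}[0,\alpha]$ be independent of $Z$ and define $U_\alpha=Z$ if $\|Z\|\le\alpha$ and $U_\alpha=\frac{Z}{\|Z\|}V$ otherwise, with distribution $\mu_{U_\alpha}$. Then \[ W_2(\mu_Z,\mu_{U_\alpha})\le\sqrt2\,(\alpha+\sqrt d\sigma_Z)\,e^{-\alpha^2/(2d\sigma_Z^2)}. \]
   Context: $W_2(\mu,\nu)=\inf\mathbb{E}^{1/2}\|U-V\|^2$ over couplings of $U\sim\mu$, $V\sim\nu$ is the second-order Wasserstein distance. A real random variable $A$ is $\sigma$-sub-Gaussian if $\inf\{t>0:\mathbb{E}\exp(A^2/t^2)\le2\}=\sigma<\infty$. *)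

(* Defs.v *)
From HB Require Import structures.
From mathcomp Require Import all_boot all_order all_algebra.
From mathcomp Require Import all_classical all_reals all_analysis.
From mathcomp Require Import measurable_realfun.
Set Implicit Arguments. Unset Strict Implicit. Unset Printing Implicit Defensive.
Import Order.TTheory GRing.Theory Num.Theory.
Import numFieldNormedType.Exports.
Local Open Scope classical_set_scope.
Local Open Scope ring_scope.

Section defs.
Context {R : realType}.

(* Points of R^d are d-tuples of reals, with the product (= Borel) sigma-algebra
   provided by mathcomp-analysis. *)

Definition enorm (d : nat) (x : d.-tuple R) : R :=
  Num.sqrt (\sum_(i < d) (tnth x i) ^+ 2).

Definition tscale (d : nat) (c : R) (x : d.-tuple R) : d.-tuple R :=
  map_tuple (fun y => c * y) x.

(* Lebesgue integral over R^d of a nonnegative function, as the iterated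
   one-dimensional Lebesgue integral (Tonelli). *)
Fixpoint lebesgue_int_Rd (n : nat) : (n.-tuple R -> \bar R) -> \bar R :=
  match n with
  | 0 => fun g => g [tuple]
  | n'.+1 => fun g =>
      (\int[@lebesgue_measure R]_x lebesgue_int_Rd (fun t => g (cons_tuple x t)))%E
  end.

Definition has_density (dO : measure_display) (Omega : measurableType dO)
  (P : probability Omega R) (d : nat) (X : Omega -> d.-tuple R) : Prop :=
  exists f : d.-tuple R -> \bar R,
    (forall x, (0 <= f x)%E) /\ measurable_fun [set: d.-tuple R] f /\
    forall A : set (d.-tuple R), measurable A ->
      P (X @^-1` A) = lebesgue_int_Rd (fun x => ((\1_A x)%:E * f x)%E).

Definition subgaussian (dO : measure_display) (Omega : measurableType dO)
  (P : probability Omega R) (A : Omega -> R) (sigma : R) : Prop :=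
  ereal_inf [set t%:E | t in [set t : R | 0 < t /\
      (\int[P]_w (expR (A w ^+ 2 / t ^+ 2))%:E <= 2%:E)%E]] = sigma%:E.

Definition independent2 (dO : measure_display) (Omega : measurableType dO)
  (P : probability Omega R) d1 d2 (T1 : measurableType d1) (T2 : measurableType d2)
  (X : Omega -> T1) (V : Omega -> T2) : Prop :=
  forall (A : set T1) (B : set T2), measurable A -> measurable B ->
    P (X @^-1` A `&` V @^-1` B) = (P (X @^-1` A) * P (V @^-1` B))%E.

Definition esqrt (x : \bar R) : \bar R :=
  match x with
  | r%:E => (Num.sqrt r)%:E
  | +oo%E => +oo%E
  | -oo%E => 0%E
  end.

Definition coupling (d : nat) (mu nu : set (d.-tuple R) -> \bar R)
  (pi : probability (d.-tuple R * d.-tuple R)%type R) : Prop :=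
  forall A : set (d.-tuple R), measurable A ->
    pi (fst @^-1` A) = mu A /\ pi (snd @^-1` A) = nu A.

Definition W2 (d : nat) (mu nu : set (d.-tuple R) -> \bar R) : \bar R :=
  ereal_inf [set esqrt (\int[pi]_p ((enorm (map_tuple (fun ij => ij.1 - ij.2)
                                    (zip_tuple p.1 p.2))) ^+ 2)%:E)%E
            | pi in [set pi | coupling mu nu pi]].

End defs.

(* Main.v *)
Require Import Defs.
From HB Require Import structures.
From mathcomp Require Import all_boot all_order all_algebra.
From mathcomp Require Import all_classical all_reals all_analysis.
From mathcomp Require Import measurable_realfun.
From mathcomp Require Import ring lra.
Import Order.TTheory GRing.Theory Num.Theory.
Import numFieldNormedType.Exports.
Local Open Scope classical_set_scope.
Local Open Scope ring_scope.

Section helpers.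
Context {R : realType}.

Lemma real_key (x alpha t : R) : 0 <= alpha -> alpha < x -> 0 < t ->
  x ^+ 2 <= (alpha + t) ^+ 2 * expR (- alpha ^+ 2 / t ^+ 2) * expR (x ^+ 2 / t ^+ 2).
Proof.
move=> a0 ax t0.
set q := (x - alpha) / t.
have hx : x = alpha + t * q by rewrite /q mulrC divfK ?gt_eqF //; ring.
have q0 : 0 <= q by rewrite /q divr_ge0 // ?subr_ge0 ?ltW.
have h1 : x ^+ 2 <= (1 + q ^+ 2) * (alpha + t) ^+ 2.
  rewrite hx.
  have e1 : 0 <= (alpha * q - t) ^+ 2 by exact: sqr_ge0.
  have e2 : 0 <= alpha * t * (1 + q ^+ 2).
    by apply: mulr_ge0; [apply: mulr_ge0 =>//; exact: ltW | apply: addr_ge0 => //; exact: sqr_ge0].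
  nra.
have h2 : 1 + q ^+ 2 <= expR (q ^+ 2) := expR_ge1Dx _.
have h3 : q ^+ 2 <= - alpha ^+ 2 / t ^+ 2 + x ^+ 2 / t ^+ 2.
  rewrite -mulrDl /q expr_div_n ler_pM2r; last by rewrite invr_gt0 exprn_gt0.
  nra.
rewrite -mulrA -expRD (le_trans h1) // mulrC ler_wpM2l ?sqr_ge0 //.
by apply: (le_trans h2); rewrite ler_expR.
Qed.


Lemma enorm_sq {d} (z : d.-tuple R) : enorm z ^+ 2 = \sum_(i < d) tnth z i ^+ 2.
Proof. by rewrite /enorm sqr_sqrtr // sumr_ge0 // => i _; exact: sqr_ge0. Qed.

Lemma enorm_ge0 {d} (z : d.-tuple R) : 0 <= enorm z.
Proof. exact: sqrtr_ge0. Qed.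

Lemma tnth_zipT {d} {T1 T2 : Type} (t : d.-tuple T1) (u : d.-tuple T2) i :
  tnth (zip_tuple t u) i = (tnth t i, tnth u i).
Proof.
rewrite (tnth_nth (tnth t i, tnth u i)) /= nth_zip ?size_tuple //.
by rewrite -!tnth_nth.
Qed.

Definition tdiff {d} (p : d.-tuple R * d.-tuple R) : d.-tuple R :=
  map_tuple (fun ij => ij.1 - ij.2) (zip_tuple p.1 p.2).

Lemma tnth_tdiff {d} (p : d.-tuple R * d.-tuple R) i :
  tnth (tdiff p) i = tnth p.1 i - tnth p.2 i.
Proof. by rewrite /tdiff tnth_map tnth_zipT. Qed.

Lemma tuple_key {d} (z : d.-tuple R) (v alpha t : R) :
  0 < alpha -> 0 < t -> 0 <= v <= alpha ->
  enorm (tdiff (z, if enorm z <= alpha then z else tscale (v / enorm z) z)) ^+ 2 <=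
  (alpha + t) ^+ 2 * expR (- alpha ^+ 2 / t ^+ 2) * expR (enorm z ^+ 2 / t ^+ 2).
Proof.
move=> a0 t0 /andP[v0 va].
have rhs0 : 0 <= (alpha + t) ^+ 2 * expR (- alpha ^+ 2 / t ^+ 2) * expR (enorm z ^+ 2 / t ^+ 2).
  by apply: mulr_ge0; [apply: mulr_ge0; [exact: sqr_ge0 | exact: expR_ge0] | exact: expR_ge0].
case: ifPn => hz.
  rewrite enorm_sq big1 // => i _.
  by rewrite tnth_tdiff /= subrr expr0n.
rewrite -ltNge in hz.
apply: (le_trans _ (real_key _ _ _ (ltW a0) hz t0)).
set c := v / enorm z.
have n0 : 0 < enorm z by apply: lt_trans hz.
have c0 : 0 <= c by rewrite divr_ge0 // ltW.
have c1 : c <= 1 by rewrite ler_pdivrMr // mul1r (le_trans va) // ltW.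
rewrite !enorm_sq.
have -> : \sum_(i < d) tnth (tdiff (z, tscale c z)) i ^+ 2 =
   (1 - c) ^+ 2 * \sum_(i < d) tnth z i ^+ 2.
  rewrite big_distrr /=; apply: eq_bigr => i _.
  rewrite tnth_tdiff /= /tscale tnth_map; ring.
apply: ler_piMl; first by apply: sumr_ge0 => i _; exact: sqr_ge0.
apply: exprn_ile1; first by rewrite subr_ge0.
by rewrite lerBlDr lerDl.
Qed.


Lemma measurable_enorm {d} : measurable_fun [set: d.-tuple R] (@enorm R d).
Proof.
rewrite /enorm; apply: measurableT_comp; first exact: (continuous_measurable_fun (@sqrt_continuous R)).
apply: measurable_sum => i; apply: measurable_funX; exact: measurable_tnth.
Qed.

Lemma measurable_tdiff {d} : measurable_fun [set: d.-tuple R * d.-tuple R] (@tdiff d).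
Proof.
apply/measurable_fun_tnthP => i.
rewrite (_ : _ \o _ = fun p => tnth p.1 i - tnth p.2 i); last first.
  by apply: funext => p /=; rewrite tnth_tdiff.
apply: measurable_funB.
  exact: measurableT_comp (measurable_tnth i) measurable_fst.
exact: measurableT_comp (measurable_tnth i) measurable_snd.
Qed.

Lemma continuous_gmax (alpha : R) : 0 < alpha ->
  continuous (fun x : R => (Num.max x alpha)^-1).
Proof.
move=> a0 x; apply: (@continuousV R R (fun y => Num.max y alpha) x).
  by rewrite gt_eqF // lt_max a0 orbT.
have hid : continuous (@id R) by move=> z; exact: cvg_id.
have := @max_fun_continuous _ R R id (cst alpha) hid (@cst_continuous R R alpha).
by move=> /(_ x).
Qed.


Lemma measurable_U d0 (Omega : measurableType d0) {d} (Z : Omega -> d.-tuple R)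
  (V : Omega -> R) (alpha : R) :
  0 < alpha -> measurable_fun setT Z -> measurable_fun setT V ->
  measurable_fun setT (fun w => if enorm (Z w) <= alpha then Z w
                                else tscale (V w / enorm (Z w)) (Z w)).
Proof.
move=> a0 mZ mV.
have mnZ : measurable_fun setT (fun w => enorm (Z w)) :=
  measurableT_comp measurable_enorm mZ.
rewrite (_ : (fun w => _) = fun w => if enorm (Z w) <= alpha then Z w
   else tscale (V w * (Num.max (enorm (Z w)) alpha)^-1) (Z w)); last first.
  apply: funext => w; case: ifPn => // h.
  by rewrite max_l // ltW // ltNge.
apply: measurable_fun_ifT => //.
- exact: measurable_fun_ler mnZ (measurable_cst _).
- apply/measurable_fun_tnthP => i.
  rewrite (_ : _ \o _ = fun w => (V w * (Num.max (enorm (Z w)) alpha)^-1) * tnth (Z w) i);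
    last by apply: funext => w; rewrite /= /tscale tnth_map.
  apply: measurable_funM; first apply: measurable_funM => //.
    have mg := continuous_measurable_fun (continuous_gmax _ a0). exact: (measurableT_comp mg mnZ).
  exact: measurableT_comp (measurable_tnth i) mZ.
Qed.


Lemma limit_step (j s alpha : R) : 0 < s ->
  (forall t, s < t -> j <= 2 * ((alpha + t) ^+ 2 * expR (- alpha ^+ 2 / t ^+ 2))) ->
  j <= 2 * ((alpha + s) ^+ 2 * expR (- alpha ^+ 2 / s ^+ 2)).
Proof.
move=> s0 hj.
pose h := fun t : R => 2 * ((alpha + t) * (alpha + t) * expR (- (alpha * alpha) * (t * t)^-1)).
have hE : forall t, 2 * ((alpha + t) ^+ 2 * expR (- alpha ^+ 2 / t ^+ 2)) = h t.
  by move=> t; rewrite /h !expr2.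
have hc : h @ s --> h s.
  apply: cvgM; first exact: cvg_cst.
  apply: cvgM; first by apply: cvgM; (apply: cvgD; [exact: cvg_cst | exact: cvg_id]).
  apply: (cvg_comp (fun x : R => - (alpha * alpha) / (x * x)) expR _ (@continuous_expR R _)).
  apply: cvgM; first exact: cvg_cst.
  apply: cvgV; first by rewrite mulf_neq0 ?gt_eqF.
  by apply: cvgM; exact: cvg_id.
rewrite hE; apply/ler_addgt0Pr => e e0.
move/cvgrPdist_lt : hc => /(_ e e0) /nbhs_ballP [δ δ0 hδ].
have st : s < s + δ / 2 by rewrite ltrDl divr_gt0.
have hb : ball_ Num.Def.normr s δ (s + δ / 2).
  rewrite /= opprD addrA subrr add0r normrN ger0_norm ?divr_ge0 ?ltW //.
  by rewrite ltr_pdivrMr // ltr_pMr // ltr1n.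
have := hδ _ hb; rewrite /= => hlt.
have := hj _ st; rewrite hE => hjt.
have := ler_norm (h (s + δ / 2) - h s); rewrite distrC => hn.
lra.
Qed.

End helpers.

Theorem lemma19 (R : realType) (dO : measure_display) (Omega : measurableType dO)
  (P : probability Omega R) (d : nat)
  (Z : Omega -> d.-tuple R) (sigmaZ : R) (alpha : R) (V : Omega -> R) :
  measurable_fun [set: Omega] Z ->
  has_density P Z ->
  subgaussian P (fun w => enorm (Z w)) (Num.sqrt d%:R * sigmaZ) ->
  let alpha_bar := ereal_inf
    [set a%:E | a in [set a : R | P [set w | enorm (Z w) <= a] = 1%E]] in
  0 < alpha -> (alpha%:E < alpha_bar)%E ->
  measurable_fun [set: Omega] V ->
  (forall B : set R, measurable B ->
     P (V @^-1` B) = (\int[@lebesgue_measure R]_(x in B) (uniform_pdf 0 alpha x)%:E)%E) ->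
  independent2 P Z V ->
  let U_alpha := fun w => if enorm (Z w) <= alpha then Z w
                          else tscale (V w / enorm (Z w)) (Z w) in
  (W2 (pushforward P Z) (pushforward P U_alpha) <=
    (Num.sqrt 2 * (alpha + Num.sqrt d%:R * sigmaZ)
       * expR (- alpha ^+ 2 / (2 * d%:R * sigmaZ ^+ 2)))%:E)%E.

Proof.
move=> mZ _ hsub alpha_bar a0 _ mV hV _.
pose U := fun w => if enorm (Z w) <= alpha then Z w
                   else tscale (V w / enorm (Z w)) (Z w).
change (W2 (pushforward P Z) (pushforward P U) <=
    (Num.sqrt 2 * (alpha + Num.sqrt d%:R * sigmaZ)
       * expR (- alpha ^+ 2 / (2 * d%:R * sigmaZ ^+ 2)))%:E)%E.
have mU : measurable_fun setT U := @measurable_U R _ _ d Z V alpha a0 mZ mV.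
set s := Num.sqrt d%:R * sigmaZ.
have mnZ : measurable_fun setT (fun w => enorm (Z w)) :=
  measurableT_comp measurable_enorm mZ.
have mZU : measurable_fun setT (fun w => (Z w, U w)) := measurable_fun_pair mZ mU.
pose XU : {mfun Omega >-> (d.-tuple R * d.-tuple R)%type} :=
  HB.pack (fun w => (Z w, U w)) (isMeasurableFun.Build _ _ _ _ _ mZU).
set F := fun p : (d.-tuple R * d.-tuple R)%type =>
  ((enorm (map_tuple (fun ij => ij.1 - ij.2) (zip_tuple p.1 p.2))) ^+ 2)%:E.
have hW : (W2 (pushforward P Z) (pushforward P U) <=
           esqrt (\int[distribution P XU]_p F p))%E.
  apply: ereal_inf_lbound; exists (distribution P XU) => //.
have mF : measurable_fun setT F.
  rewrite /F; apply/measurable_EFinP; apply: measurable_funX.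
  exact: (measurableT_comp measurable_enorm measurable_tdiff).
have hI : (\int[distribution P XU]_p F p =
          \int[P]_w (enorm (tdiff (Z w, U w)) ^+ 2)%:E)%E.
  by rewrite ge0_integral_distribution // => p; rewrite lee_fin sqr_ge0.
rewrite hI in hW.
set J := (\int[P]_w (enorm (tdiff (Z w, U w)) ^+ 2)%:E)%E in hW.
have J0 : (0 <= J)%E by apply: integral_ge0 => w _; rewrite lee_fin sqr_ge0.
have s0 : 0 <= s.
  have : (0%:E <= s%:E)%E.
    rewrite -hsub; apply: le_ereal_inf_tmp => _ [t [t0 _] <-].
    by rewrite lee_fin ltW.
  by rewrite lee_fin.
have hB : forall t, s < t ->
    (J <= (2 * ((alpha + t) ^+ 2 * expR (- alpha ^+ 2 / t ^+ 2)))%:E)%E.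
  move=> t st.
  have t0 : 0 < t by exact: le_lt_trans s0 st.
  have hs := hsub; rewrite /subgaussian in hs.
  have : (ereal_inf [set u%:E | u in [set u : R | (0 < u)%R /\
      (\int[P]_w (expR (enorm (Z w) ^+ 2 / u ^+ 2))%:E <= 2%:E)%E]] < t%:E)%E.
    by rewrite hs lte_fin.
  case/ereal_inf_lt => y [t1 [t10 ht1] <-]; rewrite lte_fin => t1t.
  set C := (alpha + t) ^+ 2 * expR (- alpha ^+ 2 / t ^+ 2).
  have C0 : 0 <= C by apply: mulr_ge0; [exact: sqr_ge0 | exact: expR_ge0].
  have mexp : forall u : R, measurable_fun setT (fun w => expR (enorm (Z w) ^+ 2 / u ^+ 2)).
    move=> u; apply: measurableT_comp; first exact: measurable_expR.
    by apply: measurable_funM => //; exact: measurable_funX.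
  have step1 : (J <= \int[P]_w (C * expR (enorm (Z w) ^+ 2 / t ^+ 2))%:E)%E.
    apply: ae_ge0_le_integral => //.
    - by move=> w _; rewrite lee_fin sqr_ge0.
    - apply/measurable_EFinP; apply: measurable_funX.
      exact: (measurableT_comp measurable_enorm (measurableT_comp measurable_tdiff mZU)).
    - by move=> w _; rewrite lee_fin mulr_ge0 ?expR_ge0.
    - apply/measurable_EFinP; apply: measurable_funM => //; exact: mexp.
    - exists (V @^-1` (~` `[0, alpha]%classic)); split.
      + rewrite -[X in measurable X]setTI; apply: mV => //.
        apply: measurableC; exact: measurable_itv.
      + apply: (eq_trans (hV _ _)); first by apply: measurableC; exact: measurable_itv.
        apply: integral0_eq => x /= hx.
        rewrite /uniform_pdf ifF //; apply/negP => h; apply: hx.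
        by rewrite in_itv.
      + move=> w /= hw hv; apply: hw => _.
        rewrite lee_fin /U.
        have hv' : 0 <= V w <= alpha by move: hv; rewrite /= in_itv.
        exact: (tuple_key (Z w) (V w) alpha t a0 t0 hv').
  have step2 : (\int[P]_w (C * expR (enorm (Z w) ^+ 2 / t ^+ 2))%:E =
      C%:E * \int[P]_w (expR (enorm (Z w) ^+ 2 / t ^+ 2))%:E)%E.
    rewrite (eq_integral (fun w => (C%:E * (expR (enorm (Z w) ^+ 2 / t ^+ 2))%:E)%E));
      last by move=> w _; rewrite EFinM.
    rewrite ge0_integralZl_EFin //.
    apply/measurable_EFinP; exact: mexp.
  have step3 : (\int[P]_w (expR (enorm (Z w) ^+ 2 / t ^+ 2))%:E <=
       \int[P]_w (expR (enorm (Z w) ^+ 2 / t1 ^+ 2))%:E)%E.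
    apply: ge0_le_integral => //.
    - apply/measurable_EFinP; exact: mexp.
    - apply/measurable_EFinP; exact: mexp.
    - move=> w _; rewrite lee_fin ler_expR; apply: ler_wpM2l; first exact: sqr_ge0.
      rewrite lef_pV2 ?posrE ?exprn_gt0 //.
      have : 0 <= t1 ^+ 2 <= t ^+ 2 by apply/andP; split; [exact: sqr_ge0 | nra].
      by case/andP.
  rewrite step2 in step1.
  apply: (le_trans step1).
  have C0' : (0 <= C%:E)%E by rewrite lee_fin.
  rewrite mulrC EFinM.
  exact: (@lee_wpmul2l _ C%:E C0' _ _ (le_trans step3 ht1)).
set RHS := Num.sqrt 2 * (alpha + s) * expR (- alpha ^+ 2 / (2 * d%:R * sigmaZ ^+ 2)).
have hR0 : 0 <= RHS.
  by apply: mulr_ge0; [apply: mulr_ge0; [exact: sqrtr_ge0 | exact: addr_ge0 (ltW a0) s0] | exact: expR_ge0].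
have [j Jj] : exists j, J = j%:E.
  have s1 : s < s + 1 by rewrite ltrDl ltr01.
  have := hB (s + 1) s1.
  move: J0; case: (J) => [j _ _| |] //; first by exists j.
have hj : forall t, s < t -> j <= 2 * ((alpha + t) ^+ 2 * expR (- alpha ^+ 2 / t ^+ 2)).
  by move=> t st; rewrite -lee_fin -Jj; exact: hB.
suff hjR : j <= RHS ^+ 2.
  apply: (le_trans hW); rewrite Jj /= lee_fin.
  by rewrite -[X in _ <= X](ger0_norm hR0) -sqrtr_sqr ler_sqrt // sqr_ge0.
have ds : d%:R * sigmaZ ^+ 2 = s ^+ 2 by rewrite /s exprMn sqr_sqrtr // ler0n.
have e2 : forall x : R, expR x ^+ 2 = expR (2 * x) by move=> x; rewrite expr2 -expRD mulr2n mulrDl mul1r.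
have [s00|sp] := eqVneq s 0.
  have ds0 : 2 * d%:R * sigmaZ ^+ 2 = 0 by rewrite -mulrA ds s00 expr0n mulr0.
  rewrite /RHS ds0 invr0 mulr0 expR0 mulr1 s00 addr0 exprMn sqr_sqrtr ?ler0n //.
  have a20 : 0 < alpha / 2 by rewrite divr_gt0.
  have := hj (alpha / 2); rewrite s00 => /(_ a20).
  have -> : - alpha ^+ 2 / (alpha / 2) ^+ 2 = -4.
    by field; rewrite gt_eqF.
  have e4 : expR (-4) * 5 <= 1 :> R.
    have h5 : 5 <= expR 4 :> R by have := expR_ge1Dx (4 : R); lra.
    have : expR (-4) * expR 4 = 1 :> R by rewrite -expRD addNr expR0.
    have := expR_ge0 (-4 : R); nra.
  have := expR_ge0 (-4 : R).
  nra.
have sp' : 0 < s by rewrite lt_neqAle eq_sym sp s0.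
apply: (le_trans (limit_step _ _ _ sp' hj)).
rewrite /RHS -[2 * d%:R * sigmaZ ^+ 2]mulrA ds.
clearbody s.
rewrite !exprMn e2 sqr_sqrtr //.
have -> : 2 * (- alpha ^+ 2 / (2 * s ^+ 2)) = - alpha ^+ 2 / s ^+ 2.
  by field.
by rewrite mulrA.
Qed.
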